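(* Let $p$ be an odd prime and let $N(p)$ be the number of residue classes $c\in\mathbb{Z}/(p)$ for which the polynomial $\Phi_{3,\tilde f}(x)$ attached to $\tilde f(x)=x^2+c$ over $\mathbb{Z}/(p)$ has a linear factor modulo $p$. Then $$N(p)\le \frac13\left(p+2\left(\frac{-3}{p}\right)\right),$$ where $\left(\frac{-3}{p}\right)$ is the Legendre symbol (equal to $0$ for $p=3$).
   Context: For $f(x)=x^2+c$, $\Phi_{3,f}(x)=\frac{f^3(x)-x}{f(x)-x}$, where $f^3$ is the threefold iterate; explicitly $\Phi_{3,f}(x)=x^6+x^5+(3c+1)x^4+(2c+1)x^3+(3c^2+3c+1)x^2+(c^2+2c+1)x+c^3+2c^2+c+1$, considered modulo $p$. *)

(* Defs.v *)
From HB Require Import structures.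
From mathcomp Require Import all_boot all_order all_algebra.
Set Implicit Arguments. Unset Strict Implicit. Unset Printing Implicit Defensive.
Import Order.TTheory GRing.Theory Num.Theory.
Local Open Scope ring_scope.

(* Phi_{3,f}(x) for f(x) = x^2 + c over a commutative ring R, using the
   explicit formula for (f^3(x) - x)/(f(x) - x). *)
Definition Phi3 (R : comNzRingType) (c : R) : {poly R} :=
  'X^6 + 'X^5 + (3 * c + 1) *: 'X^4 + (2 * c + 1) *: 'X^3
  + (3 * c ^+ 2 + 3 * c + 1) *: 'X^2 + (c ^+ 2 + 2 * c + 1) *: 'X
  + (c ^+ 3 + 2 * c ^+ 2 + c + 1)%:P.

Definition has_linear_factor (F : finFieldType) (q : {poly F}) : bool :=
  [exists a : F, exists b : F, (a != 0) && ((a *: 'X + b%:P) %| q)].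

Definition Ncount (p : nat) : nat :=
  #|[set c : 'F_p | has_linear_factor (Phi3 c)]|.

Definition legendre_m3 (p : nat) : int :=
  if (p %| 3)%N then 0
  else if [exists x : 'F_p, x ^+ 2 == - 3] then 1 else -1.

(* Main.v *)
Require Import Defs.
From HB Require Import structures.
From mathcomp Require Import all_boot all_order all_algebra.
From mathcomp Require Import ring lra zify.
From Stdlib Require Import Lia.
Import Order.TTheory GRing.Theory Num.Theory.
Local Open Scope ring_scope.

Section Alg.
Variable F : fieldType.
Hypothesis h2 : (2 : F) != 0.

Lemma PhiE (c x : F) : (Phi3 c).[x] =
  x^+6 + x^+5 + (3 * c + 1) * x^+4 + (2 * c + 1) * x^+3
  + (3 * c ^+ 2 + 3 * c + 1) * x^+2 + (c ^+ 2 + 2 * c + 1) * x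
  + (c ^+ 3 + 2 * c ^+ 2 + c + 1).
Proof. by rewrite /Phi3 !hornerE. Qed.

Definition Pt (t : F) := t^+6 + 2*t^+5 + 4*t^+4 + 8*t^+3 + 9*t^+2 + 4*t + 1.
Definition gg (t : F) := - Pt t / (4 * t^+2 * (t+1)^+2).
Definition tau (t : F) := - (t+1) / t.

Lemma h4 : (4 : F) != 0.
Proof. have -> : (4:F) = 2 * 2 by ring. by rewrite mulf_neq0. Qed.

Lemma lemA (c x : F) : (Phi3 c).[x] = 0 -> x^+2 + c != x ->
  let t := x + x^+2 + c in
  [/\ t != 0, t + 1 != 0, t^+2 + t + 1 != 0 & gg t = c].
Proof.
move=> H0 Hnf t.
have G0 : 4 * t^+2 * (t+1)^+2 * c + Pt t = 0.
  have -> : 4 * t^+2 * (t+1)^+2 * c + Pt t = (Phi3 c).[x] *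
   (1 + 3*c + 4*c^+2 + c^+3 + 3*x + 10*x*c + 5*x*c^+2 + 9*x^+2 + 15*x^+2*c
    + 3*x^+2*c^+2 + 13*x^+3 + 10*x^+3*c + 11*x^+4 + 3*x^+4*c + 5*x^+5 + x^+6).
    by rewrite PhiE /Pt /t; ring.
  by rewrite H0 mul0r.
have H1 : 2*t*(t+1)*x - (t^+3 + 2*t^+2 + t + 1) = 0.
  have -> : 2*t*(t+1)*x - (t^+3 + 2*t^+2 + t + 1) = - (Phi3 c).[x].
    by rewrite PhiE /t; ring.
  by rewrite H0 oppr0.
have t0 : t != 0.
  apply/eqP => E; move: G0; rewrite E /Pt.
  have -> : 4 * 0 ^+ 2 * (0 + 1) ^+ 2 * c +
    (0 ^+ 6 + 2 * 0 ^+ 5 + 4 * 0 ^+ 4 + 8 * 0 ^+ 3 + 9 * 0 ^+ 2 + 4 * 0 + 1) = (1 : F) by ring.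
  by move/eqP; rewrite oner_eq0.
have t1 : t + 1 != 0.
  apply/eqP => E; have E' : t = -1 by apply/eqP; rewrite -subr_eq0 opprK E.
  move: G0; rewrite E' /Pt.
  have -> : 4 * (-1) ^+ 2 * (-1 + 1) ^+ 2 * c +
    ((-1) ^+ 6 + 2 * (-1) ^+ 5 + 4 * (-1) ^+ 4 + 8 * (-1) ^+ 3 + 9 * (-1) ^+ 2 + 4 * (-1) + 1) = (1 : F) by ring.
  by move/eqP; rewrite oner_eq0.
have te : t^+2 + t + 1 != 0.
  apply/eqP => E; move/eqP: Hnf; apply.
  have : (t - 2*x) = 0.
    have -> : t - 2*x = (2*t*(t+1)*x - (t^+3 + 2*t^+2 + t + 1)) + (t^+2+t+1)*(t+1-2*x).
      by ring.
    by rewrite H1 E mul0r addr0.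
  move/eqP; rewrite /t subr_eq0 => /eqP E2.
  apply/eqP; rewrite -subr_eq0; apply/eqP.
  have -> : x ^+ 2 + c - x = x + x^+2 + c - 2 * x by ring.
  by rewrite E2 subrr.
split=> //.
have dn : 4 * t^+2 * (t+1)^+2 != 0 by rewrite !mulf_neq0 ?expf_neq0 ?h4.
have E : - Pt t = c * (4 * t^+2 * (t+1)^+2).
  apply/eqP; rewrite -subr_eq0.
  have -> : - Pt t - c * (4 * t^+2 * (t+1)^+2) = -(4 * t^+2 * (t+1)^+2 * c + Pt t) by ring.
  by rewrite G0 oppr0.
by rewrite /gg E mulfK.
Qed.

Lemma lemB (c x : F) : (Phi3 c).[x] = 0 -> x^+2 + c = x ->
  exists u, u^+2 + u + 1 = 0 /\ c = u / 2 - u^+2 / 4.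
Proof.
move=> H0 Hf.
have Ec : c = x - x^+2 by rewrite -{1}Hf; ring.
exists (2 * x); split.
  have -> : (2 * x)^+2 + 2 * x + 1 = (Phi3 c).[x] by rewrite PhiE Ec; ring.
  exact: H0.
rewrite Ec; field; by rewrite h2 h4.
Qed.

Lemma lemC (t : F) : t != 0 -> t + 1 != 0 -> t^+2 + t + 1 != 0 ->
  [/\ tau t != 0, tau t + 1 != 0, (tau t)^+2 + tau t + 1 != 0 &
      [/\ tau t != t, tau (tau t) != t & gg (tau t) = gg t]].
Proof.
move=> t0 t1 te.
have tt0 : tau t != 0 by rewrite /tau mulf_neq0 ?oppr_eq0 ?invr_eq0.
have tt1 : tau t + 1 = - t^-1 by rewrite /tau; field.
have tt1' : tau t + 1 != 0 by rewrite tt1 oppr_eq0 invr_eq0.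
split => //; last split.
- have -> : (tau t)^+2 + tau t + 1 = (t^+2 + t + 1) / t^+2 by rewrite /tau; field.
  by rewrite mulf_neq0 ?invr_eq0 ?expf_neq0.
- rewrite -subr_eq0.
  have -> : tau t - t = - (t^+2 + t + 1) / t by rewrite /tau; field.
  by rewrite mulf_neq0 ?oppr_eq0 ?invr_eq0.
- rewrite -subr_eq0.
  have -> : tau (tau t) - t = - (t^+2 + t + 1) / (t + 1).
    rewrite /tau; field; by rewrite t0 t1 oppr_eq0 t1.
  by rewrite mulf_neq0 ?oppr_eq0 ?invr_eq0.
- rewrite /gg /tau /Pt; field.
  have -> : -(t+1)+t = -1 :> F by ring.
  by rewrite t0 t1 h4 !oppr_eq0 t1 oner_eq0.
Qed.
End Alg.
Arguments h4 {F}. Arguments lemA {F} h2 {c x}. Arguments lemB {F} h2 {c x}.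
Arguments lemC {F} h2 {t}. Arguments gg {F}. Arguments tau {F}. Arguments Pt {F}.

Section Count.
Variable p : nat.
Hypothesis hp : prime p.
Hypothesis hodd : odd p.

Lemma p_gt2 : (2 < p)%N.
Proof. have := prime_gt1 hp; move: hodd; case: p => [|[|[|q]]] //. Qed.

Lemma h2p : (2 : 'F_p) != 0.
Proof.
apply/eqP => E; have := val_Fp_nat hp 2; rewrite E /= modn_small ?p_gt2 //.
Qed.

Lemma h3p : ((3 : 'F_p) == 0) = (p %| 3)%N.
Proof.
apply/eqP/idP.
  by move=> E; have := val_Fp_nat hp 3; rewrite E /dvdn => <-.
move=> H; apply: val_inj; have := val_Fp_nat hp 3; rewrite (eqP H) => E.
by rewrite [LHS]E.
Qed.

Definition FixS := [set u : 'F_p | u^+2 + u + 1 == 0].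

Lemma card_Fix : #|FixS| = (if (p %| 3)%N then 1%N
   else if [exists x : 'F_p, x ^+ 2 == - 3] then 2%N else 0%N).
Proof.
case: ifP => [d3|nd3].
  have h3 : (3 : 'F_p) = 0 by apply/eqP; rewrite h3p.
  have -> : FixS = [set 1].
    apply/setP => u; rewrite !inE.
    have -> : u^+2 + u + 1 = (u - 1)^+2 + 3 * u by ring.
    by rewrite h3 mul0r addr0 expf_eq0 /= subr_eq0.
  by rewrite cards1.
have h3 : (3 : 'F_p) != 0 by rewrite h3p nd3.
case: ifP => [/existsP [y /eqP Hy]|/existsP Hn].
  have -> : FixS = [set (y - 1) / 2; (- y - 1) / 2].
    apply/setP => u; rewrite !inE.
    have -> : u^+2 + u + 1 = (u - (y - 1) / 2) * (u - (- y - 1) / 2).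
      have -> : (u - (y - 1) / 2) * (u - (- y - 1) / 2) = u^+2 + u + (1 - y^+2) / 4.
        by field; rewrite h4 ?h2p.
      rewrite Hy; congr (_ + _); field.
      exact: h4 h2p.
    by rewrite mulf_eq0 !subr_eq0.
  rewrite cards2; suff -> : (y-1)/2 != (-y-1)/2 by [].
  apply/negP => /eqP E.
  have y0 : y = 0.
    have : (2 : 'F_p) * y = 0.
      have -> : (2 : 'F_p) * y = ((y - 1) / 2 - (- y - 1) / 2) * 2 by field; rewrite h2p.
      by rewrite E subrr mul0r.
    by move/eqP; rewrite mulf_eq0 (negbTE h2p) /= => /eqP.
  move: Hy; rewrite y0 expr0n /= => /eqP; rewrite eq_sym oppr_eq0 (negbTE h3) //.
have -> : FixS = set0.
  apply/setP => u; rewrite !inE; apply/negP => /eqP Hu; apply: Hn.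
  exists (2 * u + 1); apply/eqP.
  have -> : (2 * u + 1)^+2 = 4 * (u^+2 + u + 1) - 3 by ring.
  by rewrite Hu mulr0 sub0r.
by rewrite cards0.
Qed.

Definition Dset := [set t : 'F_p | [&& t != 0, t + 1 != 0 & t^+2 + t + 1 != 0]].
Definition Sset := [set gg t | t in Dset].
Definition Spset := [set (u / 2 - u^+2 / 4) | u in FixS].
Definition Good := [set c : 'F_p | has_linear_factor (Phi3 c)].

Lemma good_sub : Good \subset Sset :|: Spset.
Proof.
apply/subsetP => c; rewrite inE => /existsP [a /existsP [b /andP [a0 Hd]]].
have rt : root (Phi3 c) (- b / a).
  apply: (root_dvdp Hd); rewrite /root !hornerE.
  by rewrite /= mulrAC divff // mul1r addNr.
move/rootP: rt; set x := - b / a => H0.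
rewrite inE; case: (eqVneq (x^+2 + c) x) => Hf.
  have [u [Hu Ec]] := lemB h2p H0 Hf.
  apply/orP; right; apply/imsetP; exists u => //; by rewrite inE Hu.
have [t0 t1 te Eg] := lemA h2p H0 Hf.
apply/orP; left; apply/imsetP; exists (x + x^+2 + c) => //.
by rewrite inE t0 t1 te.
Qed.

Lemma S_bound : (3 * #|Sset| <= #|Dset|)%N.
Proof.
have -> : #|Dset| = (\sum_(t in Dset) 1)%N by rewrite sum1_card.
rewrite (partition_big_imset gg) /= -/Sset.
rewrite mulnC -sum_nat_const; apply: leq_sum => c /imsetP [t tD ->].
move: tD; rewrite inE => /and3P [t0 t1 te].
have [tt0 tt1 tte [ne1 ne2 Eg1]] := lemC h2p t0 t1 te.
have [ttt0 ttt1 ttte [ne3 _ Eg2]] := lemC h2p tt0 tt1 tte.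
rewrite sum1_card.
set s := [:: t; tau t; tau (tau t)].
have us : uniq s by rewrite /s /= !inE !negb_or eq_sym ne1 eq_sym ne2 eq_sym ne3.
have <- : size s = 3%N by [].
move/card_uniqP: us => <-.
apply: subset_leq_card; apply/subsetP => y; rewrite /s !inE => /or3P [] /eqP ->;
  rewrite unfold_in /= !inE ?t0 ?t1 ?te ?tt0 ?tt1 ?tte ?ttt0 ?ttt1 ?ttte ?Eg2 ?Eg1 ?eqxx //.
Qed.

Lemma D_card : (#|Dset| + #|FixS| + 2 = p)%N.
Proof.
pose E := [set t : 'F_p | t^+2 + t + 1 != 0].
have EF : FixS = ~: E by apply/setP => u; rewrite !inE negbK.
have B2 : #|[set (0 : 'F_p); -1]| = 2%N.
  by rewrite cards2 eq_sym oppr_eq0 oner_eq0.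
have BE : [set (0 : 'F_p); -1] \subset E.
  apply/subsetP => u; rewrite !inE => /orP [] /eqP ->.
    have -> : (0 : 'F_p) ^+ 2 + 0 + 1 = 1 by ring.
    by rewrite oner_eq0.
  have -> : (-1 : 'F_p) ^+ 2 + -1 + 1 = 1 by ring.
  by rewrite oner_eq0.
have DE : Dset = E :\: [set 0; -1].
  apply/setP => u; rewrite !inE; rewrite (addr_eq0 u 1) negb_or.
  by rewrite andbA andbC.
have HC := cardsC E; rewrite card_Fp // -EF in HC.
have HD : #|Dset| = (#|E| - 2)%N by rewrite DE cardsD (setIidPr BE) B2.
have : (2 <= #|E|)%N by rewrite -B2 subset_leq_card.
lia.
Qed.

Lemma main_nat : (3 * Ncount p + 2 <= p + 2 * #|FixS|)%N.
Proof.
have h1 : (Ncount p <= #|Sset| + #|Spset|)%N.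
  rewrite /Ncount -/Good.
  apply: leq_trans (subset_leq_card good_sub) _.
  by rewrite cardsU leq_subr.
have h2 : (#|Spset| <= #|FixS|)%N by apply: leq_imset_card.
have := S_bound; have := D_card. lia.
Qed.
End Count.

Theorem theorem15 (p : nat) (hp : prime p) (hodd : odd p) :
  (Ncount p)%:R <= ((p%:R + 2 * (legendre_m3 p)%:~R) / 3 : rat).
Proof.
have H := @main_nat p hp hodd.
have Hq : ((3 * Ncount p + 2)%N%:R <= (p + 2 * #|FixS p|)%N%:R :> rat) by rewrite ler_nat.
rewrite !natrD in Hq.
have := @card_Fix p hp hodd.
rewrite ler_pdivlMr // /legendre_m3.
case: ifP => d3 Ef; last case: ifP Ef => d4 Ef; rewrite Ef in Hq.
- have -> : ((0 : int)%:~R : rat) = 0 by [].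
  move: Hq; lra.
- have -> : ((1 : int)%:~R : rat) = 1 by [].
  move: Hq; lra.
- have -> : ((-1 : int)%:~R : rat) = -1 by rewrite mulrN1z.
  move: Hq; lra.
Qed.
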